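(* (i) $\mathcal T$ is generated as an algebra by $A$ together with all $E^*_{[s,t]}$. (ii) $\mathcal T$ equals the (associative, unital) subalgebra of $\mathrm{Mat}_X(\mathbb C)$ generated by $L_1,L_2,R_1,R_2$. (iii) Let $\mathcal L$ be the Lie subalgebra generated by $L_1,L_2,R_1,R_2$; then $\mathcal L\simeq\mathfrak{sl}_3(\mathbb C)$, a subspace $W\subseteq V$ is an $\mathcal L$-submodule if and only if it is a $\mathcal T$-submodule, and such $W$ is irreducible as an $\mathcal L$-module if and only if it is irreducible as a $\mathcal T$-module.
   Context: Let $d\ge1$, $\mathbb F_3=\{0,1,2\}$ (integers mod 3) and $X=\mathbb F_3^d$. The Hamming digraph $H^*(d,3)$ has vertex set $X$, with an arc from $y$ to $z$ iff $y$ and $z$ differ in exactly one coordinate $i$ and $z_i=y_i+1$ in $\mathbb F_3$. Let $V=\mathbb C^X$ with standard basis $\{\hat y:y\in X\}$, and $\mathrm{Mat}_X(\mathbb C)$ the algebra of complex matrices indexed by $X$, acting on $V$. The adjacency matrix $A$ has $(y,z)$-entry $1$ if there is an arc from $y$ to $z$ and $0$ otherwise. The type of $y\in X$ is $(r,s,t)$ where $r,s,t$ are the numbers of coordinates of $y$ equal to $0,1,2$ ($r+s+t=d$). For integers $s,t$, $E^*_{[s,t]}$ is the diagonal matrix whose $(y,y)$-entry is $1$ if $y$ has exactly $s$ ones and $t$ twos, and $0$ otherwise. The Terwilliger algebra $\mathcal T$ is the subalgebra of $\mathrm{Mat}_X(\mathbb C)$ generated by $A$, $A^\top$ and all $E^*_{[s,t]}$.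 Define linear operators on $V$: $R_1\hat y$ is the sum of $\hat z$ over all $z$ obtained from $y$ by changing exactly one coordinate equal to $0$ into $1$ (empty sum $=0$); similarly $R_2$ changes one coordinate $1\mapsto2$, $L_1$ changes $1\mapsto0$, $L_2$ changes $2\mapsto 1$. (One has $A^\top=R_1+R_2+L_3$ and $A=L_1+L_2+R_3$, where $L_3$ changes one coordinate $2\mapsto0$ and $R_3$ one coordinate $0\mapsto 2$.) *)

(* Defs.v *)
From HB Require Import structures.
From mathcomp Require Import all_boot all_order all_algebra.
From mathcomp.real_closed Require Import complex.
From mathcomp Require Import Rstruct.
Set Implicit Arguments. Unset Strict Implicit. Unset Printing Implicit Defensive.
Import Order.TTheory GRing.Theory Num.Theory.
Local Open Scope ring_scope.

Definition C : fieldType := complex Rdefinitions.R.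

(* X = F_3^d, coordinates in 'I_3 = {0,1,2} *)
Definition X (d : nat) : finType := {ffun 'I_d -> 'I_3}.

Definition nX (d : nat) : nat := #|X d|.
Definition MatX (d : nat) := 'M[C]_(nX d).
Definition VX (d : nat) := 'cV[C]_(nX d).

Definition mxX (d : nat) (f : X d -> X d -> C) : MatX d :=
  \matrix_(i, j) f (enum_val i) (enum_val j).

Definition arc (d : nat) (y z : X d) : bool :=
  [exists i : 'I_d, (nat_of_ord (z i) == ((y i).+1 %% 3)%N)
                    && [forall j : 'I_d, (j != i) ==> (z j == y j)]].

Definition adjA (d : nat) : MatX d := mxX (fun y z => (arc y z)%:R).

Definition ones (d : nat) (y : X d) : nat := #|[set i | nat_of_ord (y i) == 1%N]|.
Definition twos (d : nat) (y : X d) : nat := #|[set i | nat_of_ord (y i) == 2%N]|.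

Definition Estar (d : nat) (s t : int) : MatX d :=
  mxX (fun y z => ((y == z) && ((ones y)%:Z == s) && ((twos y)%:Z == t))%:R).

Definition chg (d : nat) (a b : nat) (y z : X d) : bool :=
  [exists i : 'I_d, [&& nat_of_ord (y i) == a, nat_of_ord (z i) == b &
                     [forall j : 'I_d, (j != i) ==> (z j == y j)]]].

(* operators on V = C^X acting on column vectors: (M)_{z,y} = coefficient of zhat in M yhat *)
Definition opX (d : nat) (a b : nat) : MatX d := mxX (fun z y => (chg a b y z)%:R).
Definition R1 (d : nat) : MatX d := opX d 0 1.
Definition R2 (d : nat) : MatX d := opX d 1 2.
Definition L1 (d : nat) : MatX d := opX d 1 0.
Definition L2 (d : nat) : MatX d := opX d 2 1.

Inductive in_alg (K : fieldType) (n : nat) (S : 'M[K]_n -> Prop) : 'M[K]_n -> Prop :=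
  | alg_gen M : S M -> in_alg S M
  | alg_one : in_alg S 1%:M
  | alg_add M N : in_alg S M -> in_alg S N -> in_alg S (M + N)
  | alg_scale (c : K) M : in_alg S M -> in_alg S (c *: M)
  | alg_mul M N : in_alg S M -> in_alg S N -> in_alg S (M *m N).

Definition lie_br (K : fieldType) (n : nat) (M N : 'M[K]_n) : 'M[K]_n := M *m N - N *m M.

Inductive in_lie (K : fieldType) (n : nat) (S : 'M[K]_n -> Prop) : 'M[K]_n -> Prop :=
  | lie_gen M : S M -> in_lie S M
  | lie_zero : in_lie S 0
  | lie_add M N : in_lie S M -> in_lie S N -> in_lie S (M + N)
  | lie_scale (c : K) M : in_lie S M -> in_lie S (c *: M)
  | lie_brk M N : in_lie S M -> in_lie S N -> in_lie S (lie_br M N).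

Definition Tgens (d : nat) (M : MatX d) : Prop :=
  M = adjA d \/ M = (adjA d)^T \/ exists s t : int, M = Estar d s t.
Definition Talg (d : nat) : MatX d -> Prop := in_alg (@Tgens d).

Definition AEgens (d : nat) (M : MatX d) : Prop :=
  M = adjA d \/ exists s t : int, M = Estar d s t.

Definition LRgens (d : nat) (M : MatX d) : Prop :=
  M = L1 d \/ M = L2 d \/ M = R1 d \/ M = R2 d.

Definition Lie (d : nat) : MatX d -> Prop := in_lie (@LRgens d).

Definition sl3 (M : 'M[C]_3) : Prop := \tr M = 0.

Definition lie_iso_sl3 (n : nat) (L : 'M[C]_n -> Prop) : Prop :=
  exists f : 'M[C]_3 -> 'M[C]_n,
    [/\ (forall (a : C) (x y : 'M[C]_3), f (a *: x + y) = a *: f x + f y),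
        (forall x y, sl3 x -> sl3 y -> f x = f y -> x = y),
        (forall x, sl3 x -> L (f x)),
        (forall M, L M -> exists2 x, sl3 x & f x = M) &
        (forall x y, sl3 x -> sl3 y -> f (lie_br x y) = lie_br (f x) (f y))].

Definition submod (n : nat) (P : 'M[C]_n -> Prop) (W : {vspace 'cV[C]_n}) : Prop :=
  forall M v, P M -> v \in W -> M *m v \in W.

Definition irred (n : nat) (P : 'M[C]_n -> Prop) (W : {vspace 'cV[C]_n}) : Prop :=
  [/\ submod P W, W != 0%VS &
      forall U : {vspace 'cV[C]_n}, (U <= W)%VS -> submod P U -> U = 0%VS \/ U = W].

(* Main.v *)
From Pilot Require Import Defs.
From HB Require Import structures.
From mathcomp Require Import all_boot all_order all_algebra.
From mathcomp.real_closed Require Import complex.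
From mathcomp Require Import Rstruct.
From mathcomp Require Import ring.
Set Implicit Arguments. Unset Strict Implicit. Unset Printing Implicit Defensive.
Import Order.TTheory GRing.Theory Num.Theory.
Local Open Scope ring_scope.
Local Notation in_alg := Pilot.Defs.in_alg.

Section Basic.
Variable d : nat.
Implicit Types (f g : X d -> X d -> C).

Lemma mxX_mul f g : mxX f *m mxX g = mxX (fun y z => \sum_u f y u * g u z).
Proof.
apply/matrixP => i j; rewrite !mxE.
rewrite [RHS](reindex (fun k : 'I_(nX d) => enum_val k)) /=; last first.
by exists (fun u => enum_rank u) => u _; rewrite ?enum_valK ?enum_rankK.
by apply: eq_bigr => k _; rewrite !mxE.
Qed.

Lemma mxX_add f g : mxX f + mxX g = mxX (fun y z => f y z + g y z).
Proof. by apply/matrixP => i j; rewrite !mxE. Qed.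
Lemma mxX_scale (c : C) f : c *: mxX f = mxX (fun y z => c * f y z).
Proof. by apply/matrixP => i j; rewrite !mxE. Qed.
Lemma mxX_opp f : - mxX f = mxX (fun y z => - f y z).
Proof. by apply/matrixP => i j; rewrite !mxE. Qed.
Lemma mxX_one : (1%:M : MatX d) = mxX (fun y z => (y == z)%:R).
Proof. by apply/matrixP => i j; rewrite !mxE (inj_eq enum_val_inj). Qed.
Lemma mxX_tr f : (mxX f)^T = mxX (fun y z => f z y).
Proof. by apply/matrixP => i j; rewrite !mxE. Qed.
Lemma mxX_eq f g : (forall y z, f y z = g y z) -> mxX f = mxX g.
Proof. by move=> e; apply/matrixP => i j; rewrite !mxE e. Qed.
Lemma mxX_entry f y z : mxX f (enum_rank y) (enum_rank z) = f y z.
Proof. by rewrite mxE !enum_rankK. Qed.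
Lemma mxX_inj f g : mxX f = mxX g -> forall y z, f y z = g y z.
Proof. by move=> e y z; rewrite -!mxX_entry e. Qed.
End Basic.

Lemma natC_eq (m n : nat) : ((m%:R : C) == n%:R) = (m == n).
Proof. by rewrite eqr_nat. Qed.

Section FDef.
Variable d : nat.

Definition agree (i : 'I_d) (z y : X d) : bool := [forall j, (j != i) ==> (z j == y j)].
Definition Fi (x : 'M[C]_3) (i : 'I_d) (z y : X d) : C := (agree i z y)%:R * x (z i) (y i).
Definition FF (x : 'M[C]_3) (z y : X d) : C := \sum_i Fi x i z y.
Definition F (x : 'M[C]_3) : MatX d := mxX (FF x).
Definition upd (z : X d) (i : 'I_d) (c : 'I_3) : X d := [ffun j => if j == i then c else z j].

Lemma upd_same z i c : upd z i c i = c.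
Proof. by rewrite ffunE eqxx. Qed.
Lemma upd_other z i c j : j != i -> upd z i c j = z j.
Proof. by rewrite ffunE => /negbTE ->. Qed.

Lemma agree_sum i z (g : X d -> C) :
  \sum_u (agree i z u)%:R * g u = \sum_c g (upd z i c).
Proof.
rewrite (eq_bigr (fun u => \sum_c (u == upd z i c)%:R * g u)).
  rewrite exchange_big; apply: eq_bigr => c _.
  rewrite (bigD1 (upd z i c)) //= eqxx mul1r big1 ?addr0 // => u /negbTE ->.
  by rewrite mul0r.
move=> u _; rewrite -mulr_suml; congr (_ * _).
case: (boolP (agree i z u)) => /forallP H.
  rewrite (bigD1 (u i)) //= big1 ?addr0.
    have -> : u == upd z i (u i) => //.
    apply/eqP/ffunP => j; rewrite ffunE; case: eqP => [->|/eqP ne] //.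
    by apply/esym/eqP; exact: (implyP (H j)) ne.
  move=> c nc; case: eqP => // eu; move: nc; by rewrite eu upd_same eqxx.
rewrite big1 // => c _; case: eqP => // eu; exfalso; apply: H => j.
by rewrite eu; apply/implyP => ne; rewrite upd_other.
Qed.

Lemma agree_upd i z c w : agree i (upd z i c) w = agree i z w.
Proof.
by apply: eq_forallb => j; case: (boolP (j != i)) => //= ne; rewrite upd_other.
Qed.

Lemma agree_upd2 i j z c w : i != j ->
  agree j (upd z i c) w = (c == w i) && [forall k, ((k != i) && (k != j)) ==> (z k == w k)].
Proof.
move=> nij; apply/forallP/andP => [H|[/eqP ec /forallP H] k].
  split. by have := H i; move/implyP/(_ nij); rewrite upd_same.

  apply/forallP => k; apply/implyP => /andP [ki kj].
  by have := H k; rewrite kj /= upd_other.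
apply/implyP => kj; case: (eqVneq k i) => [->|ki]; first by rewrite upd_same ec.
by rewrite upd_other //; have := H k; rewrite ki kj.
Qed.

Lemma K1 x y i z w : \sum_u Fi x i z u * Fi y i u w = Fi (x *m y) i z w.
Proof.
rewrite (eq_bigr (fun u => (agree i z u)%:R * (x (z i) (u i) * Fi y i u w))); last first.
  by move=> u _; rewrite {1}/Fi -mulrA.
rewrite agree_sum /Fi mxE mulr_sumr; apply: eq_bigr => c _.
by rewrite agree_upd !upd_same mulrCA.
Qed.

Lemma K2 x y i j z w : i != j ->
  \sum_u Fi x i z u * Fi y j u w =
  [forall k, ((k != i) && (k != j)) ==> (z k == w k)]%:R * x (z i) (w i) * y (z j) (w j).
Proof.
move=> nij.
rewrite (eq_bigr (fun u => (agree i z u)%:R * (x (z i) (u i) * Fi y j u w))); last first.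
  by move=> u _; rewrite {1}/Fi -mulrA.
rewrite agree_sum (bigD1 (w i)) //= big1 ?addr0.
  rewrite /Fi agree_upd2 // eqxx upd_same upd_other 1?eq_sym //.
  by rewrite /= mulrCA mulrA.
move=> c nc; rewrite /Fi agree_upd2 // (negbTE nc) /=.
by rewrite mul0r mulr0.
Qed.


Lemma Fi_lin a x y i z w : Fi (a *: x + y) i z w = a * Fi x i z w + Fi y i z w.
Proof. by rewrite /Fi !mxE mulrDr mulrCA. Qed.
Lemma Fi_sub x y i z w : Fi (x - y) i z w = Fi x i z w - Fi y i z w.
Proof. by rewrite /Fi !mxE mulrBr. Qed.

Lemma F_lin a x y : F (a *: x + y) = a *: F x + F y.
Proof.
rewrite /F mxX_scale mxX_add; apply: mxX_eq => z w.
by rewrite /FF mulr_sumr -big_split; apply: eq_bigr => i _; rewrite Fi_lin.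
Qed.

Lemma F_add x y : F (x + y) = F x + F y.
Proof.
rewrite /F mxX_add; apply: mxX_eq => z w.
by rewrite /FF -big_split; apply: eq_bigr => i _; rewrite /Fi mxE mulrDr.
Qed.
Lemma F_scale a x : F (a *: x) = a *: F x.
Proof.
rewrite /F mxX_scale; apply: mxX_eq => z w.
by rewrite /FF mulr_sumr; apply: eq_bigr => i _; rewrite /Fi mxE mulrCA.
Qed.

Lemma F_br x y : F (lie_br x y) = lie_br (F x) (F y).
Proof.
rewrite /lie_br /F !mxX_mul mxX_opp mxX_add; apply: mxX_eq => z w.
have E : forall x y, \sum_u FF x z u * FF y u w =
   \sum_i \sum_j \sum_u Fi x i z u * Fi y j u w.
  move=> x' y'; rewrite (eq_bigr (fun u => \sum_i \sum_j Fi x' i z u * Fi y' j u w)).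
    rewrite exchange_big; apply: eq_bigr => i _; rewrite exchange_big //.
  by move=> u _; rewrite /FF big_distrlr.
rewrite !E [X in _ = _ - X]exchange_big /= -sumrB /FF; apply: eq_bigr => i _.
rewrite -sumrB (bigD1 i) //= [X in _ = _ + X]big1 ?addr0.
  by rewrite !K1 Fi_sub.
move=> j nji; rewrite !K2 1?eq_sym //.
have -> : [forall k, (k != j) && (k != i) ==> (z k == w k)] = [forall k, (k != i) && (k != j) ==> (z k == w k)].
  by apply: eq_forallb => k; rewrite andbC.
  by apply/eqP; rewrite subr_eq0 -!mulrA [y _ _ * _]mulrC.
by rewrite eq_sym.
Qed.
End FDef.

Definition o0 : 'I_3 := @Ordinal 3 0 isT.
Definition o1 : 'I_3 := @Ordinal 3 1 isT.
Definition o2 : 'I_3 := @Ordinal 3 2 isT.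
Definition dl (p q : 'I_3) : 'M[C]_3 := delta_mx p q.
Lemma ord3_ind (P : 'I_3 -> Prop) : P o0 -> P o1 -> P o2 -> forall i, P i.
Proof.
move=> H0 H1 H2 [[|[|[|k]]] h].
- by rewrite (_ : Ordinal h = o0) //; apply: val_inj.
- by rewrite (_ : Ordinal h = o1) //; apply: val_inj.
- by rewrite (_ : Ordinal h = o2) //; apply: val_inj.
- by [].
Qed.
Lemma o01 : (o0 == o1) = false. Proof. by []. Qed.
Lemma o02 : (o0 == o2) = false. Proof. by []. Qed.
Lemma o10 : (o1 == o0) = false. Proof. by []. Qed.
Lemma o12 : (o1 == o2) = false. Proof. by []. Qed.
Lemma o20 : (o2 == o0) = false. Proof. by []. Qed.
Lemma o21 : (o2 == o1) = false. Proof. by []. Qed.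
Lemma sum3 (f : 'I_3 -> C) : \sum_i f i = f o0 + f o1 + f o2.
Proof. rewrite !big_ord_recr big_ord0 /= add0r; congr (_ + _ + _); congr f; exact: val_inj. Qed.

Ltac m3e := rewrite ?mxE; rewrite ?sum3; rewrite ?mxE; rewrite ?(eqxx, o01, o02, o10, o12, o20, o21) /=.
Ltac m3s := rewrite ?(mul0r,mulr0,add0r,addr0,mul1r,mulr1,subr0,sub0r,oppr0,subrr,opprK,addNr,addrN).
Ltac m3 := apply/matrixP; apply: ord3_ind; apply: ord3_ind; do 3 (m3e; m3s); ring.

Definition xA := dl o0 o1 + dl o1 o2 + dl o2 o0.
Definition xAT := dl o1 o0 + dl o2 o1 + dl o0 o2.

Lemma I1 : lie_br (dl o2 o1) (dl o1 o0) = dl o2 o0.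
Proof. rewrite /lie_br /dl; m3. Qed.
Lemma I2 : lie_br (dl o0 o1) (dl o1 o2) = dl o0 o2.
Proof. rewrite /lie_br /dl; m3. Qed.
Lemma J3 : (1%:M : 'M[C]_3) = dl o0 o0 + dl o1 o1 + dl o2 o2.
Proof. rewrite /dl; m3. Qed.
Lemma I5a : lie_br (dl o2 o2) xA = dl o2 o0 - dl o1 o2.
Proof. rewrite /lie_br /xA /dl; m3. Qed.
Lemma I5b : lie_br (dl o2 o2) (dl o2 o0 - dl o1 o2) = dl o2 o0 + dl o1 o2.
Proof. rewrite /lie_br /dl; m3. Qed.
Lemma I8 : lie_br (dl o1 o2) (dl o2 o0) = dl o1 o0.
Proof. rewrite /lie_br /dl; m3. Qed.
Lemma I9 : lie_br (dl o2 o0) (dl o0 o1) = dl o2 o1.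
Proof. rewrite /lie_br /dl; m3. Qed.
Lemma I10 : lie_br (dl o0 o1) (dl o1 o0) = dl o0 o0 - dl o1 o1.
Proof. rewrite /lie_br /dl; m3. Qed.
Lemma I11 : lie_br (dl o1 o2) (dl o2 o1) = dl o1 o1 - dl o2 o2.
Proof. rewrite /lie_br /dl; m3. Qed.

Lemma xA_E p q : xA p q = (nat_of_ord q == (p.+1 %% 3)%N)%:R.
Proof. rewrite /xA /dl; move: p q; apply: ord3_ind; apply: ord3_ind; m3e; m3s; done. Qed.
Lemma xAT_E p q : xAT p q = (nat_of_ord p == (q.+1 %% 3)%N)%:R.
Proof. rewrite /xAT /dl; move: p q; apply: ord3_ind; apply: ord3_ind; m3e; m3s; done. Qed.

Lemma tr_dl p q : p != q -> \tr (dl p q) = 0.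
Proof.
move=> npq; rewrite /mxtrace big1 // => i _; rewrite mxE.
by case: eqP => // ->; rewrite (negbTE npq).
Qed.

Lemma sum3M (V : nmodType) (f : 'I_3 -> V) : \sum_i f i = f o0 + f o1 + f o2.
Proof. rewrite !big_ord_recr big_ord0 /= add0r; congr (_ + _ + _); congr f; exact: val_inj. Qed.

Lemma decomp (x : 'M[C]_3) : \tr x = 0 ->
  x = x o0 o1 *: dl o0 o1 + x o1 o2 *: dl o1 o2 + x o1 o0 *: dl o1 o0 + x o2 o1 *: dl o2 o1
    + x o0 o2 *: dl o0 o2 + x o2 o0 *: dl o2 o0 + x o0 o0 *: (dl o0 o0 - dl o1 o1)
    + (x o0 o0 + x o1 o1) *: (dl o1 o1 - dl o2 o2).
Proof.
rewrite /mxtrace sum3 => h.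
have h22 : x o2 o2 = - x o0 o0 - x o1 o1.
  by rewrite -[LHS]subr0 -h; ring.
rewrite /dl; apply/matrixP; apply: ord3_ind; apply: ord3_ind; rewrite !mxE;
  rewrite ?(eqxx, o01, o02, o10, o12, o20, o21) /=; m3s; rewrite ?h22; ring.
Qed.

Section Entries.
Variable d : nat.

Lemma FF_exists (Q : 'I_3 -> 'I_3 -> bool) (x : 'M[C]_3) :
  (forall p, Q p p = false) -> (forall p q, x p q = (Q p q)%:R) ->
  forall z y : X d, FF x z y = [exists i, Q (z i) (y i) && agree i z y]%:R.
Proof.
move=> Qirr xE z y; rewrite /FF /Fi.
under eq_bigr do rewrite xE -natrM mulnb andbC.
case: existsP => [[i /andP [Qi Ai]]|N].
  rewrite (bigD1 i) //= Qi Ai big1 ?addr0 // => j nji.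
  have : z j == y j by move/forallP: Ai => /(_ j) /implyP; apply.
  by move/eqP => ->; rewrite Qirr.
rewrite big1 // => i _; case: (boolP (Q _ _ && _)) => // h; exfalso; apply: N; by exists i.
Qed.

Lemma sum_bool (b : 'I_d -> bool) : \sum_i ((b i : nat)%:R : C) = (#|[set i | b i]|)%:R.
Proof.
rewrite cardsE -sum1_card natr_sum [RHS]big_mkcond /=; apply: eq_bigr => i _.
by rewrite /in_mem /=; case: (b i).
Qed.

Lemma FF_diag p (z y : X d) : FF (delta_mx p p) z y =
  (z == y)%:R * (#|[set i | nat_of_ord (z i) == nat_of_ord p]|)%:R.
Proof.
rewrite /FF /Fi; case: (eqVneq z y) => [<-|nzy].
  rewrite mul1r -sum_bool; apply: eq_bigr => i _.
  have -> : agree i z z by apply/forallP => j; apply/implyP.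
  by rewrite mxE mul1r andbb.
rewrite mul0r big1 // => i _; rewrite mxE.
case: (boolP (agree i z y)) => A; last by rewrite mul0r.
case: (eqVneq (z i) p) => [zp|]; last by rewrite mulr0.
case: (eqVneq (y i) p) => [yp|]; last by rewrite andbF mulr0.
exfalso; move/eqP: nzy; apply; apply/ffunP => j.
case: (eqVneq j i) => [->|nji]; first by rewrite zp yp.
by move/forallP: A => /(_ j) /implyP /(_ nji) /eqP.
Qed.

Lemma FF_one (z y : X d) : FF 1%:M z y = (z == y)%:R * d%:R.
Proof.
rewrite /FF (eq_bigr (fun _ => (z == y)%:R)).
  by rewrite sumr_const card_ord mulr_natr.
move=> i _; rewrite /Fi mxE -natrM mulnb.
have -> // : agree i z y && (z i == y i) = (z == y).
apply/andP/eqP => [[/forallP A /eqP e]|<-].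
  apply/ffunP => j; case: (eqVneq j i) => [->//|nji].
  by move: (A j) => /implyP /(_ nji) /eqP.
by split; [apply/forallP => j; apply/implyP|].
Qed.

Definition diagX (g : X d -> C) : MatX d := mxX (fun y z => (y == z)%:R * g y).

Lemma F_diag p : F d (delta_mx p p) =
  diagX (fun y => (#|[set i | nat_of_ord (y i) == nat_of_ord p]|)%:R).
Proof. by apply: mxX_eq => z y; rewrite FF_diag. Qed.

Lemma F_one : F d 1%:M = d%:R *: 1%:M.
Proof. by rewrite mxX_one mxX_scale; apply: mxX_eq => z y; rewrite FF_one mulrC. Qed.

Lemma diagX_mul g h : diagX g *m diagX h = diagX (fun y => g y * h y).
Proof.
rewrite /diagX mxX_mul; apply: mxX_eq => y z.
rewrite (bigD1 y) //= eqxx big1 ?addr0.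
  by rewrite mul1r mulrCA.
by move=> u nu; rewrite eq_sym (negbTE nu) !mul0r.
Qed.
Lemma diagX_add g h : diagX g + diagX h = diagX (fun y => g y + h y).
Proof. by rewrite /diagX mxX_add; apply: mxX_eq => y z; rewrite mulrDr. Qed.
Lemma diagX_scale c g : c *: diagX g = diagX (fun y => c * g y).
Proof. by rewrite /diagX mxX_scale; apply: mxX_eq => y z; rewrite mulrCA. Qed.
Lemma diagX_one : (1%:M : MatX d) = diagX (fun _ => 1).
Proof. by rewrite mxX_one /diagX; apply: mxX_eq => y z; rewrite mulr1. Qed.

Lemma mxX_zero : (0 : MatX d) = mxX (fun _ _ => 0).
Proof. by apply/matrixP => i j; rewrite !mxE. Qed.

Lemma F_inj (hd : (0 < d)%N) w : F d w = 0 -> w = 0.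
Proof.
move=> Fw; have E : forall z y : X d, FF w z y = 0.
  move=> z y; have := @mxX_inj d (FF w) (fun _ _ => 0).
  rewrite -mxX_zero => /(_ Fw z y). done.
apply/matrixP => p q; rewrite mxE.
pose c : X d := [ffun _ => p]; pose i0 : 'I_d := Ordinal hd.
case: (eqVneq p q) => [<-|npq].
  have := E c c; rewrite /FF (eq_bigr (fun _ => w p p)).
    rewrite sumr_const card_ord -mulr_natl => /eqP; rewrite mulf_eq0 => /orP [|/eqP //].
    by rewrite pnatr_eq0 => /eqP dz; have := hd; rewrite dz.
  move=> i _; rewrite /Fi !ffunE.
  have -> : agree i c c by apply/forallP => j; apply/implyP.
  by rewrite mul1r.
have := E c (upd c i0 q); rewrite /FF (bigD1 i0) //= big1 ?addr0.
  rewrite /Fi upd_same ffunE.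
  have -> : agree i0 c (upd c i0 q).
    by apply/forallP => j; apply/implyP => nj; rewrite upd_other // !ffunE.
  by rewrite mul1r.
move=> i ni; rewrite /Fi.
have -> : agree i c (upd c i0 q) = false.
  apply/negbTE/negP => /forallP /(_ i0) /implyP; rewrite eq_sym => /(_ ni).
  by rewrite upd_same ffunE (negbTE npq).
by rewrite mul0r.
Qed.

End Entries.

Section Gen.
Variables (K : fieldType) (n : nat).
Implicit Types (S : 'M[K]_n -> Prop).

Lemma alg_zero S : in_alg S 0.
Proof. rewrite -(scale0r (1%:M : 'M[K]_n)); apply: alg_scale; exact: alg_one. Qed.
Lemma alg_sub S M N : in_alg S M -> in_alg S N -> in_alg S (M - N).
Proof. by move=> hM hN; rewrite -scaleN1r; apply: alg_add => //; apply: alg_scale. Qed.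
Lemma alg_br S M N : in_alg S M -> in_alg S N -> in_alg S (lie_br M N).
Proof. by move=> hM hN; apply: alg_sub; apply: alg_mul. Qed.
Lemma alg_sum S (I : Type) (r : seq I) (f : I -> 'M[K]_n) :
  (forall i, in_alg S (f i)) -> in_alg S (\sum_(i <- r) f i).
Proof.
move=> h; elim: r => [|i r IH]; first by rewrite big_nil; apply: alg_zero.
by rewrite big_cons; apply: alg_add.
Qed.
Lemma alg_mono S S' : (forall M, S M -> in_alg S' M) -> forall M, in_alg S M -> in_alg S' M.
Proof.
move=> h M; elim=> [M' /h //|||c M' _ IH|M' N' _ IH1 _ IH2].
- exact: alg_one.
- by move=> M' N' _ IH1 _ IH2; apply: alg_add.
- exact: alg_scale.
- exact: alg_mul.
Qed.
Lemma lie_sub S M N : in_lie S M -> in_lie S N -> in_lie S (M - N).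
Proof. by move=> hM hN; rewrite -scaleN1r; apply: lie_add => //; apply: lie_scale. Qed.
End Gen.

Section Sub.
Variable n : nat.
Implicit Types (P : 'M[C]_n -> Prop) (W : {vspace 'cV[C]_n}).

Lemma alg_inv P W : (forall M v, P M -> v \in W -> M *m v \in W) -> submod (in_alg P) W.
Proof.
move=> H M v hM; move: v; elim: hM => [M' PM'|||c M' _ IH|M' N' _ IH1 _ IH2].
- by move=> v; apply: H.
- by move=> v vW; rewrite mul1mx.
- by move=> M' N' _ IH1 _ IH2 v vW; rewrite mulmxDl; apply: memvD; [apply: IH1|apply: IH2].
- by move=> v vW; rewrite -scalemxAl; apply: memvZ; apply: IH.
- by move=> v vW; rewrite -mulmxA; apply: IH1; apply: IH2.
Qed.
Lemma lie_inv P W : (forall M v, P M -> v \in W -> M *m v \in W) -> submod (in_lie P) W.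
Proof.
move=> H M v hM; move: v; elim: hM => [M' PM'||M' N' _ IH1 _ IH2|c M' _ IH|M' N' _ IH1 _ IH2].
- by move=> v; apply: H.
- by move=> v vW; rewrite mul0mx mem0v.
- by move=> v vW; rewrite mulmxDl; apply: memvD; [apply: IH1|apply: IH2].
- by move=> v vW; rewrite -scalemxAl; apply: memvZ; apply: IH.
- move=> v vW; rewrite /lie_br mulmxBl -!mulmxA.
  by apply: memvB; [apply: IH1; apply: IH2|apply: IH2; apply: IH1].
Qed.
Lemma submod_lie_alg P W : submod (in_lie P) W <-> submod (in_alg P) W.
Proof.
split=> h.
  by apply: alg_inv => M v PM; apply: h; apply: lie_gen.
by apply: lie_inv => M v PM; apply: h; apply: alg_gen.
Qed.
End Sub.

Section Main.
Variable d : nat.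

Lemma F_sub x y : F d (x - y) = F d x - F d y.
Proof.
rewrite /F mxX_opp mxX_add; apply: mxX_eq => z w.
by rewrite /FF -sumrB; apply: eq_bigr => i _; rewrite Fi_sub.
Qed.

Lemma opX_F (a b : 'I_3) : a != b -> opX d a b = F d (dl b a).
Proof.
move=> nab; rewrite /opX /F; apply: mxX_eq => z y.
rewrite (FF_exists (Q := fun p q => (p == b) && (q == a))).
- rewrite /chg; congr (_%:R); congr (nat_of_bool _).
  apply/existsP/existsP => [[i /and3P [h1 h2 h3]]|[i /andP [/andP [h1 h2] h3]]]; exists i.
    by apply/andP; split => //; apply/andP.
  by apply/and3P.
- by move=> p; case: (eqVneq p b) => // ->; rewrite eq_sym (negbTE nab).
- by move=> p q; rewrite /dl mxE.
Qed.

Lemma L1F : L1 d = F d (dl o0 o1). Proof. exact: (opX_F (a := o1) (b := o0)). Qed.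
Lemma L2F : L2 d = F d (dl o1 o2). Proof. exact: (opX_F (a := o2) (b := o1)). Qed.
Lemma R1F : R1 d = F d (dl o1 o0). Proof. exact: (opX_F (a := o0) (b := o1)). Qed.
Lemma R2F : R2 d = F d (dl o2 o1). Proof. exact: (opX_F (a := o1) (b := o2)). Qed.

Lemma adjA_F : adjA d = F d xA.
Proof.
rewrite /adjA /F; apply: mxX_eq => y z.
rewrite (FF_exists (Q := fun p q => nat_of_ord q == (p.+1 %% 3)%N)).
- rewrite /arc; congr (_%:R); congr (nat_of_bool _).
  apply/existsP/existsP => [[i /andP [h1 h2]]|[i /andP [h1 h2]]]; exists i;
    rewrite h1 /=; apply/forallP => j; move: (forallP h2 j); by rewrite (eq_sym (y j)).
- by apply: ord3_ind.
- exact: xA_E.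
Qed.

Lemma adjAT_F : (adjA d)^T = F d xAT.
Proof.
rewrite /adjA mxX_tr /F; apply: mxX_eq => y z.
rewrite (FF_exists (Q := fun p q => nat_of_ord p == (q.+1 %% 3)%N)) //.
- by apply: ord3_ind.
- exact: xAT_E.
Qed.

Definition PA (S : MatX d -> Prop) x := in_alg S (F d x).
Lemma PA_add S x y : PA S x -> PA S y -> PA S (x + y).
Proof. by rewrite /PA F_add; apply: alg_add. Qed.
Lemma PA_sub S x y : PA S x -> PA S y -> PA S (x - y).
Proof. by rewrite /PA F_sub; apply: alg_sub. Qed.
Lemma PA_scale S c x : PA S x -> PA S (c *: x).
Proof. by rewrite /PA F_scale; apply: alg_scale. Qed.
Lemma PA_br S x y : PA S x -> PA S y -> PA S (lie_br x y).
Proof. by rewrite /PA F_br; apply: alg_br. Qed.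
Lemma PA_one S : PA S 1%:M.
Proof. by rewrite /PA F_one; apply: alg_scale; apply: alg_one. Qed.
Lemma PA_unscale S (c : C) x : c != 0 -> PA S (c *: x) -> PA S x.
Proof. by move=> nc h; rewrite -(scale1r x) -(mulVf nc) -scalerA; apply: PA_scale. Qed.

Definition PL x := Lie (F d x).
Lemma PL_add x y : PL x -> PL y -> PL (x + y).
Proof. by rewrite /PL F_add; apply: lie_add. Qed.
Lemma PL_sub x y : PL x -> PL y -> PL (x - y).
Proof. by rewrite /PL F_sub; apply: lie_sub. Qed.
Lemma PL_scale c x : PL x -> PL (c *: x).
Proof. by rewrite /PL F_scale; apply: lie_scale. Qed.
Lemma PL_br x y : PL x -> PL y -> PL (lie_br x y).
Proof. by rewrite /PL F_br; apply: lie_brk. Qed.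

Lemma three_neq0 : (1 + 1 + 1 : C) != 0.
Proof. have -> : (1 + 1 + 1 : C) = 3%:R by ring. by rewrite pnatr_eq0. Qed.
Lemma two_neq0 : (1 + 1 : C) != 0.
Proof. have -> : (1 + 1 : C) = 2%:R by ring. by rewrite pnatr_eq0. Qed.

Lemma lin3a (a b c : 'M[C]_3) : (1+1+1) *: b = (b - c) - (a - b) + (a + b + c).
Proof. by apply/matrixP => i j; rewrite !mxE; ring. Qed.
Lemma lin3b (a b c : 'M[C]_3) : (1+1+1) *: c = (a + b + c) - (a - b) - (b - c) - (b - c).
Proof. by apply/matrixP => i j; rewrite !mxE; ring. Qed.
Lemma lin2a (u v : 'M[C]_3) : (1+1) *: u = (u - v) + (u + v).
Proof. by apply/matrixP => i j; rewrite !mxE; ring. Qed.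
Lemma lin2b (u v : 'M[C]_3) : (1+1) *: v = (u + v) - (u - v).
Proof. by apply/matrixP => i j; rewrite !mxE; ring. Qed.
Lemma linx (a b e : 'M[C]_3) : a = (a + b + e) - b - e.
Proof. by apply/matrixP => i j; rewrite !mxE; ring. Qed.

Section LRpart.
Local Notation LR := (@LRgens d).
Lemma PA_LR01 : PA LR (dl o0 o1). Proof. by rewrite /PA -L1F; apply: alg_gen; left. Qed.
Lemma PA_LR12 : PA LR (dl o1 o2). Proof. by rewrite /PA -L2F; apply: alg_gen; right; left. Qed.
Lemma PA_LR10 : PA LR (dl o1 o0). Proof. by rewrite /PA -R1F; apply: alg_gen; right; right; left. Qed.
Lemma PA_LR21 : PA LR (dl o2 o1). Proof. by rewrite /PA -R2F; apply: alg_gen; right; right; right. Qed.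
Lemma PA_LR20 : PA LR (dl o2 o0). Proof. by rewrite -I1; apply: PA_br; [apply: PA_LR21|apply: PA_LR10]. Qed.
Lemma PA_LR02 : PA LR (dl o0 o2). Proof. by rewrite -I2; apply: PA_br; [apply: PA_LR01|apply: PA_LR12]. Qed.
Lemma PA_LRxA : PA LR xA.
Proof. by rewrite /xA; apply: PA_add; [apply: PA_add|]; [apply: PA_LR01|apply: PA_LR12|apply: PA_LR20]. Qed.
Lemma PA_LRxAT : PA LR xAT.
Proof. by rewrite /xAT; apply: PA_add; [apply: PA_add|]; [apply: PA_LR10|apply: PA_LR21|apply: PA_LR02]. Qed.
Lemma PA_LRd01 : PA LR (dl o0 o0 - dl o1 o1).
Proof. by rewrite -I10; apply: PA_br; [apply: PA_LR01|apply: PA_LR10]. Qed.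
Lemma PA_LRd12 : PA LR (dl o1 o1 - dl o2 o2).
Proof. by rewrite -I11; apply: PA_br; [apply: PA_LR12|apply: PA_LR21]. Qed.
Lemma PA_LRsum : PA LR (dl o0 o0 + dl o1 o1 + dl o2 o2).
Proof. by rewrite -J3; apply: PA_one. Qed.
Lemma PA_LR11 : PA LR (dl o1 o1).
Proof.
apply: (PA_unscale three_neq0); rewrite (lin3a (dl o0 o0) (dl o1 o1) (dl o2 o2)).
by apply: PA_add; [apply: PA_sub|]; [apply: PA_LRd12|apply: PA_LRd01|apply: PA_LRsum].
Qed.
Lemma PA_LR22 : PA LR (dl o2 o2).
Proof.
apply: (PA_unscale three_neq0); rewrite (lin3b (dl o0 o0) (dl o1 o1) (dl o2 o2)).
apply: PA_sub; last exact: PA_LRd12.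
apply: PA_sub; last exact: PA_LRd12.
apply: PA_sub; [exact: PA_LRsum|exact: PA_LRd01].
Qed.
End LRpart.
End Main.

Section Main2.
Variable d : nat.

Definition num (m : C) (s : int) : C :=
  \prod_(k <- iota 0 d.+1) (if k%:Z != s then m - k%:R else 1).

Lemma prod_neq0 (r : seq nat) (G : nat -> C) :
  (forall k, G k != 0) -> \prod_(k <- r) G k != 0.
Proof.
move=> h; elim: r => [|k r IH]; first by rewrite big_nil oner_neq0.
by rewrite big_cons mulf_neq0.
Qed.

Lemma lagrange (n : nat) (s : int) : (n <= d)%N ->
  ((n%:Z == s)%:R : C) = num n%:R s / num s%:~R s.
Proof.
move=> nd; case: (eqVneq (n%:Z) s) => [<-|ns].
  rewrite divff //; apply: prod_neq0 => k.
  case: (boolP (k%:Z != n%:Z)) => [h|_]; last exact: oner_neq0.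
  by rewrite subr_eq0 natC_eq eq_sym -eqz_nat.
have nin : n \in iota 0 d.+1 by rewrite mem_iota /= add0n ltnS.
by rewrite /num (big_rem _ nin) /= ns subrr !mul0r.
Qed.

Lemma ones_le (y : X d) : (ones y <= d)%N.
Proof. by rewrite /ones; apply: leq_trans (max_card _) _; rewrite card_ord. Qed.
Lemma twos_le (y : X d) : (twos y <= d)%N.
Proof. by rewrite /twos; apply: leq_trans (max_card _) _; rewrite card_ord. Qed.

Lemma Estar_diag s t : Estar d s t = (num s%:~R s * num t%:~R t)^-1 *:
  (diagX (fun y => num (ones y)%:R s) *m diagX (fun y => num (twos y)%:R t)).
Proof.
rewrite diagX_mul diagX_scale /Estar /diagX; apply: mxX_eq => y z.
rewrite -!mulnb !natrM lagrange ?ones_le // lagrange ?twos_le //.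
rewrite invfM; ring.
Qed.

Lemma diagX_ext (g h : X d -> C) : (forall y, g y = h y) -> diagX g = diagX h.
Proof. by move=> e; apply: mxX_eq => y z; rewrite e. Qed.

Lemma alg_num (S : MatX d -> Prop) (g : X d -> nat) s :
  in_alg S (diagX (fun y => (g y)%:R)) -> in_alg S (diagX (fun y => num (g y)%:R s)).
Proof.
move=> hg; rewrite /num; elim: (iota 0 d.+1) => [|k r IH].
  rewrite (diagX_ext (h := fun _ => 1)); last by move=> y; rewrite big_nil.
  by rewrite -diagX_one; apply: alg_one.
rewrite (diagX_ext (h := fun y => (if k%:Z != s then (g y)%:R - k%:R else 1) *
   \prod_(j <- r) (if j%:Z != s then (g y)%:R - j%:R else 1))); last first.
  by move=> y; rewrite big_cons.
rewrite -diagX_mul; apply: alg_mul => //.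
case: (k%:Z != s).
  rewrite (_ : diagX _ = diagX (fun y => (g y)%:R) - k%:R *: 1%:M).
    by apply: alg_sub => //; apply: alg_scale; apply: alg_one.
  by rewrite mxX_one mxX_scale /diagX mxX_opp mxX_add; apply: mxX_eq => y z; ring.
by rewrite -diagX_one; apply: alg_one.
Qed.

Lemma ones_diag : F d (dl o1 o1) = diagX (fun y => (ones y)%:R).
Proof. exact: F_diag. Qed.
Lemma twos_diag : F d (dl o2 o2) = diagX (fun y => (twos y)%:R).
Proof. exact: F_diag. Qed.

Lemma Estar_LR s t : in_alg (@LRgens d) (Estar d s t).
Proof.
rewrite Estar_diag; apply: alg_scale; apply: alg_mul; apply: alg_num.
  by rewrite -ones_diag; apply: PA_LR11.
by rewrite -twos_diag; apply: PA_LR22.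
Qed.

Lemma sum_pick (m k : nat) (G : nat -> C) : (m < k)%N ->
  \sum_(i < k) ((m == i)%:R * G i) = G m.
Proof.
move=> mk; rewrite (bigD1 (Ordinal mk)) //= eqxx mul1r big1 ?addr0 // => i ni.
rewrite (_ : (m == i) = false) ?mul0r //; apply/negbTE; apply: contra ni => /eqP e.
by apply/eqP/val_inj; rewrite /= e.
Qed.

Lemma twos_sum : diagX (fun y => (twos y)%:R) =
  \sum_(s < d.+1) \sum_(t < d.+1) (t%:R : C) *: Estar d (nat_of_ord s)%:Z (nat_of_ord t)%:Z.
Proof.
apply/matrixP => i j; rewrite summxE; under eq_bigr do rewrite summxE.
rewrite !mxE; under eq_bigr do under eq_bigr do rewrite !mxE.
move: (enum_val i) (enum_val j) => y z.
under eq_bigr do under eq_bigr do rewrite !eqz_nat -!mulnb !natrM.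
rewrite (eq_bigr (fun s : 'I_d.+1 => ((ones y == s)%:R *
   \sum_(t < d.+1) ((twos y == t)%:R * ((y == z)%:R * t%:R))))); last first.
  move=> s _; rewrite mulr_sumr; apply: eq_bigr => t _; ring.
rewrite (@sum_pick (ones y) d.+1 (fun s => \sum_(t < d.+1) ((twos y == t)%:R * ((y == z)%:R * t%:R)))).
  by rewrite (@sum_pick (twos y) d.+1 (fun t => (y == z)%:R * t%:R)) // ltnS twos_le.
by rewrite ltnS ones_le.
Qed.

End Main2.

Section Main3.
Variable d : nat.
Local Notation AE := (@AEgens d).
Local Notation LR := (@LRgens d).

Lemma PA_AExA : PA AE xA. Proof. by rewrite /PA -adjA_F; apply: alg_gen; left. Qed.
Lemma PA_AE22 : PA AE (dl o2 o2).
Proof.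
rewrite /PA twos_diag twos_sum; apply: alg_sum => s; apply: alg_sum => t.
by apply: alg_scale; apply: alg_gen; right; exists (nat_of_ord s)%:Z, (nat_of_ord t)%:Z.
Qed.
Lemma PA_AEa : PA AE (dl o2 o0 - dl o1 o2).
Proof. by rewrite -I5a; apply: PA_br; [apply: PA_AE22|apply: PA_AExA]. Qed.
Lemma PA_AEb : PA AE (dl o2 o0 + dl o1 o2).
Proof. by rewrite -I5b; apply: PA_br; [apply: PA_AE22|apply: PA_AEa]. Qed.
Lemma PA_AE20 : PA AE (dl o2 o0).
Proof.
apply: (PA_unscale two_neq0); rewrite (lin2a (dl o2 o0) (dl o1 o2)).
by apply: PA_add; [apply: PA_AEa|apply: PA_AEb].
Qed.
Lemma PA_AE12 : PA AE (dl o1 o2).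
Proof.
apply: (PA_unscale two_neq0); rewrite (lin2b (dl o2 o0) (dl o1 o2)).
by apply: PA_sub; [apply: PA_AEb|apply: PA_AEa].
Qed.
Lemma PA_AE01 : PA AE (dl o0 o1).
Proof.
rewrite (linx (dl o0 o1) (dl o1 o2) (dl o2 o0)) -/xA.
by apply: PA_sub; [apply: PA_sub|]; [apply: PA_AExA|apply: PA_AE12|apply: PA_AE20].
Qed.
Lemma PA_AE10 : PA AE (dl o1 o0).
Proof. by rewrite -I8; apply: PA_br; [apply: PA_AE12|apply: PA_AE20]. Qed.
Lemma PA_AE21 : PA AE (dl o2 o1).
Proof. by rewrite -I9; apply: PA_br; [apply: PA_AE20|apply: PA_AE01]. Qed.

Lemma T_LR M : Talg M -> in_alg LR M.
Proof.
apply: alg_mono => M' [->|[->|[s [t ->]]]].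
- by rewrite adjA_F; apply: PA_LRxA.
- by rewrite adjAT_F; apply: PA_LRxAT.
- exact: Estar_LR.
Qed.
Lemma LR_AE M : in_alg LR M -> in_alg AE M.
Proof.
apply: alg_mono => M' [->|[->|[->|->]]].
- by rewrite L1F; apply: PA_AE01.
- by rewrite L2F; apply: PA_AE12.
- by rewrite R1F; apply: PA_AE10.
- by rewrite R2F; apply: PA_AE21.
Qed.
Lemma AE_T M : in_alg AE M -> Talg M.
Proof.
apply: alg_mono => M' [->|[s [t ->]]]; apply: alg_gen.
- by left.
- by right; right; exists s, t.
Qed.

Lemma PL01 : PL d (dl o0 o1). Proof. by rewrite /PL -L1F; apply: lie_gen; left. Qed.
Lemma PL12 : PL d (dl o1 o2). Proof. by rewrite /PL -L2F; apply: lie_gen; right; left. Qed.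
Lemma PL10 : PL d (dl o1 o0). Proof. by rewrite /PL -R1F; apply: lie_gen; right; right; left. Qed.
Lemma PL21 : PL d (dl o2 o1). Proof. by rewrite /PL -R2F; apply: lie_gen; right; right; right. Qed.
Lemma PL20 : PL d (dl o2 o0). Proof. by rewrite -I1; apply: PL_br; [apply: PL21|apply: PL10]. Qed.
Lemma PL02 : PL d (dl o0 o2). Proof. by rewrite -I2; apply: PL_br; [apply: PL01|apply: PL12]. Qed.
Lemma PLd01 : PL d (dl o0 o0 - dl o1 o1).
Proof. by rewrite -I10; apply: PL_br; [apply: PL01|apply: PL10]. Qed.
Lemma PLd12 : PL d (dl o1 o1 - dl o2 o2).
Proof. by rewrite -I11; apply: PL_br; [apply: PL12|apply: PL21]. Qed.

Lemma PL_sl3 x : sl3 x -> PL d x.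
Proof.
move=> h; rewrite (decomp h).
repeat apply: PL_add; apply: PL_scale.
- exact: PL01.
- exact: PL12.
- exact: PL10.
- exact: PL21.
- exact: PL02.
- exact: PL20.
- exact: PLd01.
- exact: PLd12.
Qed.

Lemma F0 : F d 0 = 0.
Proof. by rewrite -(scale0r (0 : 'M[C]_3)) F_scale scale0r. Qed.

Lemma Lie_pre M : Lie M -> exists2 x, sl3 x & F d x = M.
Proof.
elim=> [M' [->|[->|[->|->]]]||M1 N1 _ [x hx <-] _ [y hy <-]|c M1 _ [x hx <-]|M1 N1 _ [x hx <-] _ [y hy <-]].
- by exists (dl o0 o1); [apply: tr_dl|rewrite L1F].
- by exists (dl o1 o2); [apply: tr_dl|rewrite L2F].
- by exists (dl o1 o0); [apply: tr_dl|rewrite R1F].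
- by exists (dl o2 o1); [apply: tr_dl|rewrite R2F].
- by exists 0; [rewrite /sl3 mxtrace0|rewrite F0].
- by exists (x + y); [rewrite /sl3 mxtraceD hx hy addr0|rewrite F_add].
- by exists (c *: x); [rewrite /sl3 mxtraceZ hx mulr0|rewrite F_scale].
- exists (lie_br x y); last by rewrite F_br.
  by rewrite /sl3 /lie_br linearB /= mxtrace_mulC subrr.
Qed.


End Main3.

Theorem proposition3p2 (d : nat) (hd : (0 < d)%N) :
  [/\ (forall M : MatX d, Talg M <-> in_alg (@AEgens d) M),
      (forall M : MatX d, Talg M <-> in_alg (@LRgens d) M) &
      [/\ lie_iso_sl3 (@Lie d),
          (forall W : {vspace VX d}, submod (@Lie d) W <-> submod (@Talg d) W) &
          (forall W : {vspace VX d}, irred (@Lie d) W <-> irred (@Talg d) W)]].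
Proof.
have TLR : forall M : MatX d, Talg M <-> in_alg (@LRgens d) M.
  by move=> M; split; [apply: T_LR|move=> h; apply: AE_T; apply: LR_AE].
have TAE : forall M : MatX d, Talg M <-> in_alg (@AEgens d) M.
  by move=> M; split; [move=> h; apply: LR_AE; apply: T_LR|apply: AE_T].
have SM : forall W : {vspace VX d}, submod (@Lie d) W <-> submod (@Talg d) W.
  move=> W; rewrite /Lie submod_lie_alg; split=> h M v hM.
    by apply: h; apply/TLR.
  by apply: h; apply/TLR.
split=> //; split=> //.
- exists (F d); split.
  + exact: F_lin.
  + move=> x y _ _ e; apply/eqP; rewrite -subr_eq0; apply/eqP; apply: (F_inj hd).
    by rewrite F_sub e subrr.
  + exact: PL_sl3.
  + exact: Lie_pre.
  + by move=> x y _ _; apply: F_br.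
- move=> W; split=> [[h1 h2 h3]|[h1 h2 h3]]; split=> //.
  + by apply/SM.
  + by move=> U UW hU; apply: h3 => //; apply/SM.
  + by apply/SM.
  + by move=> U UW hU; apply: h3 => //; apply/SM.
Qed.
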